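(* Let $L$ be a finite dimensional simple Lie algebra over $\mathbb{C}$ and let $f:L\times L\to L$ be a biderivation of $L$. Then there are two linear maps $\phi,\psi:L\to L$ such that $f(x,y)=[\phi(x),y]=[x,\psi(y)]$ for all $x,y\in L$.
   Context: A biderivation of a Lie algebra $L$ is a bilinear map $f:L\times L\to L$ such that $f([x,y],z)=[x,f(y,z)]+[f(x,z),y]$ and $f(x,[y,z])=[f(x,y),z]+[y,f(x,z)]$ for all $x,y,z\in L$. *)

(* Defs.v *)
From HB Require Import structures.
From mathcomp Require Import all_boot all_order all_algebra.
From mathcomp Require Import complex reals.
Set Implicit Arguments. Unset Strict Implicit. Unset Printing Implicit Defensive.
Import Order.TTheory GRing.Theory Num.Theory.
Local Open Scope ring_scope.

Section Lie.
Variables (K : fieldType) (V : vectType K).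

Definition bilinear_map (f : V -> V -> V) : Prop :=
  (forall y, linear (fun x => f x y)) /\ (forall x, linear (f x)).

Definition lie_bracket (br : V -> V -> V) : Prop :=
  [/\ bilinear_map br,
      (forall x, br x x = 0) &
      (forall x y z, br x (br y z) + br y (br z x) + br z (br x y) = 0)].

Definition lie_ideal (br : V -> V -> V) (I : {vspace V}) : Prop :=
  forall x y, y \in I -> br x y \in I.

Definition simple_lie (br : V -> V -> V) : Prop :=
  lie_bracket br /\
  (exists x y, br x y != 0) /\
  (forall I : {vspace V}, lie_ideal br I -> I = 0%VS \/ I = fullv).

Definition biderivation (br : V -> V -> V) (f : V -> V -> V) : Prop :=
  [/\ bilinear_map f,
      (forall x y z, f (br x y) z = br x (f y z) + br (f x z) y) &
      (forall x y z, f x (br y z) = br (f x y) z + br y (f x z))].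
End Lie.

(* Main.v *)
Require Import Defs.
From HB Require Import structures.
From mathcomp Require Import all_boot all_order all_algebra.
From mathcomp Require Import complex reals.
From mathcomp Require Import ring zify.
From Stdlib Require Import Classical ClassicalEpsilon.
Set Implicit Arguments. Unset Strict Implicit. Unset Printing Implicit Defensive.
Import GRing.Theory.
Local Open Scope ring_scope.

Section Base.
Variables (K : fieldType) (L : vectType K).

Lemma sc (k : K) (x : L) : k != 0 -> k *: x = 0 -> x = 0.
Proof. by move=> hk /eqP; rewrite scaler_eq0 (negPf hk) => /eqP. Qed.

Lemma use (k : K) (a b x : L) : a = b -> x - k *: (a - b) = 0 -> x = 0.
Proof. by move=> ->; rewrite subrr scaler0 subr0. Qed.

Lemma zero_coords (v : L) :
  (forall i, coord (vbasis fullv) i v = 0) -> v = 0.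
Proof.
move=> h; rewrite (coord_vbasis (memvf v)); apply: big1 => i _.
by rewrite h scale0r.
Qed.

Section Lin.
Variables (W : vectType K) (f : L -> W) (hf : linear f).
Definition packL : {linear L -> W} := HB.pack f (GRing.isLinear.Build K L W *:%R f hf).
Lemma lD x y : f (x + y) = f x + f y. Proof. exact: (linearD packL). Qed.
Lemma lN x : f (- x) = - f x. Proof. exact: (linearN packL). Qed.
Lemma lZ k x : f (k *: x) = k *: f x. Proof. exact: (linearZ_LR packL). Qed.
Lemma l0 : f 0 = 0. Proof. exact: (linear0 packL). Qed.
Lemma lB x y : f (x - y) = f x - f y. Proof. exact: (linearB packL). Qed.
Lemma lsum I (r : seq I) (P : pred I) (F : I -> L) :
  f (\sum_(i <- r | P i) F i) = \sum_(i <- r | P i) f (F i).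
Proof. exact: (linear_sum packL). Qed.
End Lin.

Section Bil.
Variables (B : L -> L -> L) (hB : bilinear_map B).
Lemma bDl x y z : B (x + y) z = B x z + B y z. Proof. exact: (lD (hB.1 z)). Qed.
Lemma bDr x y z : B z (x + y) = B z x + B z y. Proof. exact: (lD (hB.2 z)). Qed.
Lemma bNl x z : B (- x) z = - B x z. Proof. exact: (lN (hB.1 z)). Qed.
Lemma bNr x z : B z (- x) = - B z x. Proof. exact: (lN (hB.2 z)). Qed.
Lemma bZl k x z : B (k *: x) z = k *: B x z. Proof. exact: (lZ (hB.1 z)). Qed.
Lemma bZr k x z : B z (k *: x) = k *: B z x. Proof. exact: (lZ (hB.2 z)). Qed.
Lemma b0l z : B 0 z = 0. Proof. exact: (l0 (hB.1 z)). Qed.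
Lemma b0r z : B z 0 = 0. Proof. exact: (l0 (hB.2 z)). Qed.
Lemma bBl x y z : B (x - y) z = B x z - B y z. Proof. exact: (lB (hB.1 z)). Qed.
Lemma bBr x y z : B z (x - y) = B z x - B z y. Proof. exact: (lB (hB.2 z)). Qed.
End Bil.
End Base.
Arguments use {K L} k {a b x}.
Arguments sc {K L} [k x].

Ltac coords := apply: zero_coords => ?; rewrite ?(linearD, linearN, linearZ, linear0, linearB) /=.


Ltac tozero := apply/eqP; rewrite -subr_eq0; apply/eqP.
Ltac expand h := rewrite ?(bDl h, bDr h, bNl h, bNr h, bZl h, bZr h, b0l h, b0r h).

Section Lie.
Variables (K : fieldType) (L : vectType K) (br : L -> L -> L).
Hypothesis Hbr : lie_bracket br.
Hypothesis hn : forall n : nat, (n.+1%:R : K) != 0.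
Let hB : bilinear_map br. Proof. by case: Hbr. Qed.
Lemma bralt x : br x x = 0. Proof. by case: Hbr. Qed.
Lemma brjac x y z : br x (br y z) + br y (br z x) + br z (br x y) = 0.
Proof. by case: Hbr. Qed.
Lemma brC x y : br x y = - br y x.
Proof.
apply/eqP; rewrite -subr_eq0 opprK; apply/eqP.
have := bralt (x + y); rewrite (bDl hB) !(bDr hB) !bralt add0r addr0 => ->.
by [].
Qed.

Ltac fin := cbv beta; expand hB; coords; ring.

Lemma jd a b c : br a (br b c) = br (br a b) c + br b (br a c).
Proof.
tozero.
apply: (use 1 (brjac a b c)).
apply: (use (-1) (brC c (br a b))).
apply: (use (-1) (congr1 (br b) (brC c a))).
fin.
Qed.

Section Bider.
Variable d : L -> L -> L.
Hypothesis Hd : biderivation br d.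
Let hd : bilinear_map d. Proof. by case: Hd. Qed.
Let bd1 x y z : d (br x y) z = br x (d y z) + br (d x z) y. Proof. by case: Hd. Qed.
Let bd2 x y z : d x (br y z) = br (d x y) z + br y (d x z). Proof. by case: Hd. Qed.
Ltac find := cbv beta; expand hB; expand hd; coords; ring.

Lemma Ep x y u v :
  br (d x y) (br u v) + br (d u v) (br x y) = br (d x v) (br u y) + br (d u y) (br x v).
Proof.
tozero.
apply: (use (1%:R) (congr1 (fun w_ => (br w_ u)) (bd2 x y v))).
apply: (use (1%:R) (brC u (br (d x y) v))).
apply: (use (1%:R) (jd (d x y) u v)).
apply: (use (- 1%:R) (congr1 (fun w_ => (br w_ v)) (bd1 x u y))).
apply: (use (1%:R) (jd x (d u y) v)).
apply: (use (1%:R) (congr1 (fun w_ => (br x w_)) (bd2 u y v))).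
apply: (use (- 1%:R) (congr1 (fun w_ => (br y w_)) (bd1 x u v))).
apply: (use (1%:R) (jd x y (d u v))).
apply: (use (1%:R) (brC (d u v) (br x y))).
apply: (use (- 1%:R) (bd2 (br x u) y v)).
apply: (use (1%:R) (bd1 x u (br y v))).
apply: (use (- 1%:R) (jd y (d x v) u)).
apply: (use (- 1%:R) (congr1 (fun w_ => (br (d x v) w_)) (brC u y))).
find.
Qed.

Section Skew.
Hypothesis dskew : forall x y, d x y = - d y x.
Lemma bresar x y u v : br (d x y) (br u v) = br (br x y) (d u v).
Proof.
tozero.
apply: (sc (hn 1)).
apply: (use (1%:R) (congr1 (fun w_ => (br w_ (br u v))) (dskew x y))).
apply: (use (1%:R) (congr1 (fun w_ => (br (d u v) w_)) (brC x y))).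
apply: (use (- 1%:R) (Ep y x u v)).
apply: (use (- 1%:R) (congr1 (fun w_ => (br w_ (br y v))) (dskew u x))).
apply: (use (1%:R) (Ep x y u v)).
apply: (use (- 1%:R) (Ep x v y u)).
apply: (use (1%:R) (congr1 (fun w_ => (br w_ (br x v))) (dskew u y))).
apply: (use (1%:R) (congr1 (fun w_ => (br (d x v) w_)) (brC u y))).
apply: (use (- 1%:R) (congr1 (fun w_ => (br (d y v) w_)) (brC u x))).
apply: (use (- 2%:R) (brC (br x y) (d u v))).
find.
Qed.
End Skew.

Section Sym.
Hypothesis dsym : forall x y, d x y = d y x.
Lemma Cy x y u v : br (d x y) (br u v) + br (d x u) (br v y) + br (d x v) (br y u) = 0.
Proof.
tozero.
apply: (sc (hn 1)).
apply: (use (1%:R) (congr1 (fun w_ => (br (d x y) w_)) (brC u v))).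
apply: (use (1%:R) (Ep x u v y)).
apply: (use (- 1%:R) (congr1 (fun w_ => (br w_ (br x u))) (dsym v y))).
apply: (use (1%:R) (congr1 (fun w_ => (br (d x u) w_)) (brC v y))).
apply: (use (1%:R) (Ep x v y u)).
apply: (use (1%:R) (congr1 (fun w_ => (br w_ (br x v))) (dsym u y))).
apply: (use (- 1%:R) (congr1 (fun w_ => (br w_ (br x y))) (dsym u v))).
apply: (use (1%:R) (congr1 (fun w_ => (br (d x v) w_)) (brC y u))).
apply: (use (1%:R) (Ep x y u v)).
find.
Qed.

Lemma Z0memb x z y u v :
  br (br (d x z) y) (br u v) + br (br (d x z) u) (br v y) + br (br (d x z) v) (br y u) = 0.
Proof.
tozero.
apply: (use (1%:R) (Cy x (br z u) v y)).
apply: (use (- 1%:R) (congr1 (fun w_ => (br z w_)) (Cy x y u v))).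
apply: (use (1%:R) (jd z (d x v) (br y u))).
apply: (use (1%:R) (congr1 (fun w_ => (br (d x v) w_)) (jd z y u))).
apply: (use (1%:R) (jd z (d x u) (br v y))).
apply: (use (- 1%:R) (congr1 (fun w_ => (br w_ (br u v))) (bd2 x z y))).
apply: (use (1%:R) (jd z (d x y) (br u v))).
apply: (use (1%:R) (Cy x (br z y) u v)).
apply: (use (1%:R) (congr1 (fun w_ => (br (d x y) w_)) (jd z u v))).
apply: (use (1%:R) (congr1 (fun w_ => (br (d x u) w_)) (jd z v y))).
apply: (use (- 1%:R) (congr1 (fun w_ => (br w_ (br v y))) (bd2 x z u))).
apply: (use (1%:R) (Cy x (br z v) y u)).
apply: (use (- 1%:R) (congr1 (fun w_ => (br w_ (br y u))) (bd2 x z v))).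
find.
Qed.
End Sym.
End Bider.

Section Z0.
Variable z : L.
Hypothesis hz : forall y u v,
  br (br z y) (br u v) + br (br z u) (br v y) + br (br z v) (br y u) = 0.
Lemma Z0ideal a y u v :
  br (br (br a z) y) (br u v) + br (br (br a z) u) (br v y) + br (br (br a z) v) (br y u) = 0.
Proof.
tozero.
apply: (use (- 1%:R) (congr1 (fun w_ => (br w_ (br v y))) (jd a z u))).
apply: (use (- 1%:R) (congr1 (fun w_ => (br w_ (br u v))) (jd a z y))).
apply: (use (- 1%:R) (congr1 (fun w_ => (br (br z v) w_)) (jd a y u))).
apply: (use (- 1%:R) (congr1 (fun w_ => (br (br z y) w_)) (jd a u v))).
apply: (use (1%:R) (congr1 (fun w_ => (br a w_)) (hz y u v))).
apply: (use (- 1%:R) (jd a (br z v) (br y u))).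
apply: (use (- 1%:R) (jd a (br z y) (br u v))).
apply: (use (- 1%:R) (congr1 (fun w_ => (br (br z u) w_)) (jd a v y))).
apply: (use (- 1%:R) (hz (br a y) u v)).
apply: (use (- 1%:R) (jd a (br z u) (br v y))).
apply: (use (- 1%:R) (hz (br a u) v y)).
apply: (use (- 1%:R) (hz (br a v) y u)).
apply: (use (- 1%:R) (congr1 (fun w_ => (br w_ (br y u))) (jd a z v))).
fin.
Qed.
End Z0.

Section Z0all.
Hypothesis hall : forall z y u v,
  br (br z y) (br u v) + br (br z u) (br v y) + br (br z v) (br y u) = 0.
Lemma Z0a y u v : br (br y u) (br y v) = 0.
Proof.
tozero.
apply: (sc (hn 3)).
apply: (use (- 2%:R) (hall y y u v)).
apply: (use (2%:R) (brC (br y u) (br y v))).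
apply: (use (2%:R) (congr1 (fun w_ => (br (br y u) w_)) (brC y v))).
apply: (use (1%:R) (congr1 (fun w_ => (br w_ (br u v))) (brC y y))).
fin.
Qed.
Lemma Z0b y w u v : br (br y u) (br w v) + br (br w u) (br y v) = 0.
Proof.
tozero.
apply: (use (- 1%:R) (Z0a y u v)).
apply: (use (1%:R) (Z0a (y + w) u v)).
apply: (use (- 1%:R) (Z0a w u v)).
fin.
Qed.
Lemma Z0all a b c e : br (br a b) (br c e) = 0.
Proof.
tozero.
apply: (sc (hn 1)).
apply: (use (- 1%:R) (Z0b e c a b)).
apply: (use (1%:R) (congr1 (fun w_ => (br w_ (br c b))) (brC a e))).
apply: (use (- 1%:R) (Z0b c a e b)).
apply: (use (1%:R) (brC (br a b) (br c e))).
apply: (use (1%:R) (congr1 (fun w_ => (br (br c a) w_)) (brC b e))).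
apply: (use (- 1%:R) (Z0b b c a e)).
apply: (use (1%:R) (congr1 (fun w_ => (br w_ (br c e))) (brC a b))).
fin.
Qed.
End Z0all.

Section Centroid.
Variables (g E : L -> L -> L) (gam : L -> L).
Hypothesis Hg : biderivation br g.
Hypothesis hgam : linear gam.
Hypothesis g2 : forall x y, gam (br x y) = g x y.
Hypothesis P1 : forall p q, br (gam p) q = br p (gam q).
Hypothesis Edef : forall a b, E a b = gam (br a b) - br (gam a) b.
Let gd1 x y z : g (br x y) z = br x (g y z) + br (g x z) y. Proof. by case: Hg. Qed.
Let gd2 x y z : g x (br y z) = br (g x y) z + br y (g x z). Proof. by case: Hg. Qed.
Ltac finc := cbv beta; rewrite ?(lD hgam, lN hgam, lZ hgam, l0 hgam); expand hB; coords; ring.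

Lemma Eanti a b : E b a = - E a b.
Proof.
tozero.
apply: (use (1%:R) (Edef b a)).
apply: (use (1%:R) (congr1 (fun w_ => (gam w_)) (brC b a))).
apply: (use (- 1%:R) (P1 b a)).
apply: (use (1%:R) (Edef a b)).
apply: (use (- 1%:R) (brC (gam a) b)).
finc.
Qed.

Lemma TC a b c : br (E a b) c = br (E b c) a.
Proof.
tozero.
apply: (use (1%:R) (P1 (br a b) c)).
apply: (use (1%:R) (congr1 (fun w_ => (br w_ c)) (Edef a b))).
apply: (use (- 1%:R) (congr1 (fun w_ => (br a w_)) (P1 b c))).
apply: (use (- 1%:R) (jd a b (gam c))).
apply: (use (1%:R) (congr1 (fun w_ => (br b w_)) (P1 a c))).
apply: (use (- 1%:R) (brC (gam a) (br b c))).
apply: (use (1%:R) (jd (gam a) b c)).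
apply: (use (1%:R) (brC (gam (br b c)) a)).
apply: (use (1%:R) (congr1 (fun w_ => (br a w_)) (Edef b c))).
apply: (use (- 1%:R) (brC (E b c) a)).
apply: (use (- 1%:R) (P1 (br b c) a)).
finc.
Qed.

Lemma ED a y z : E a (br y z) = br (E a y) z + br y (E a z).
Proof.
tozero.
apply: (use (1%:R) (Edef a (br y z))).
apply: (use (- 1%:R) (jd (gam a) y z)).
apply: (use (1%:R) (gd2 a y z)).
apply: (use (- 1%:R) (congr1 (fun w_ => (br w_ z)) (g2 a y))).
apply: (use (- 1%:R) (congr1 (fun w_ => (br y w_)) (g2 a z))).
apply: (use (1%:R) (g2 a (br y z))).
apply: (use (- 1%:R) (congr1 (fun w_ => (br w_ z)) (Edef a y))).
apply: (use (- 1%:R) (congr1 (fun w_ => (br y w_)) (Edef a z))).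
finc.
Qed.

Lemma R1 a y z : E a (br y z) = 2%:R *: br (E y z) a.
Proof.
tozero.
apply: (use (- 1%:R) (brC (E z a) y)).
apply: (use (- 1%:R) (TC y z a)).
apply: (use (1%:R) (TC a y z)).
apply: (use (1%:R) (ED a y z)).
apply: (use (1%:R) (congr1 (fun w_ => (br y w_)) (Eanti a z))).
finc.
Qed.

Lemma Q y z a c : 2%:R *: br (br (E y z) a) c = br (E y z) (br a c).
Proof.
tozero.
apply: (sc (hn 1)).
apply: (use (- 2%:R) (jd (E z a) y c)).
apply: (use (2%:R) (congr1 (fun w_ => (br w_ c)) (TC y z a))).
apply: (use (1%:R) (congr1 (fun w_ => (br y w_)) (R1 z a c))).
apply: (use (- 2%:R) (congr1 (fun w_ => (br y w_)) (TC z a c))).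
apply: (use (- 1%:R) (brC (E z (br a c)) y)).
apply: (use (2%:R) (TC z a (br y c))).
apply: (use (2%:R) (congr1 (fun w_ => (br w_ z)) (R1 a y c))).
apply: (use (- 4%:R) (congr1 (fun w_ => (br w_ z)) (TC a y c))).
apply: (use (2%:R) (congr1 (fun w_ => (br w_ y)) (TC z c a))).
apply: (use (2%:R) (jd (E z c) a y)).
apply: (use (- 2%:R) (congr1 (fun w_ => (br a w_)) (TC y z c))).
apply: (use (2%:R) (congr1 (fun w_ => (br (br w_ z) y)) (Eanti a c))).
apply: (use (1%:R) (congr1 (fun w_ => (br w_ y)) (R1 z a c))).
apply: (use (- 2%:R) (jd (E y z) a c)).
apply: (use (- 2%:R) (TC z c (br a y))).
apply: (use (- 2%:R) (congr1 (fun w_ => (br w_ z)) (R1 c a y))).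
finc.
Qed.

Lemma Fin y z a b c : br (E y z) (br b (br a c)) = 0.
Proof.
tozero.
apply: (use (- 2%:R) (Q y z b (br a c))).
apply: (use (- 4%:R) (jd a (br (E y z) b) c)).
apply: (use (4%:R) (congr1 (fun w_ => (br w_ c)) (jd (E y z) a b))).
apply: (use (- 1%:R) (Q y z a (br b c))).
apply: (use (- 2%:R) (jd (E y z) a (br b c))).
apply: (use (2%:R) (congr1 (fun w_ => (br w_ c)) (Q y z a b))).
apply: (use (2%:R) (congr1 (fun w_ => (br a w_)) (Q y z b c))).
apply: (use (1%:R) (congr1 (fun w_ => (br (E y z) w_)) (jd a b c))).
apply: (use (- 1%:R) (Q y z (br a b) c)).
finc.
Qed.
End Centroid.
End Lie.


Section Vsp.
Variables (K : fieldType) (L : vectType K).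

Lemma pred_vspace (P : L -> Prop) : P 0 ->
  (forall k x y, P x -> P y -> P (k *: x + y)) ->
  exists U : {vspace L}, forall z, z \in U <-> P z.
Proof.
move=> P0 Pcl.
suff H : forall n (U : {vspace L}), (\dim {:L} - \dim U <= n)%N ->
    (forall z, z \in U -> P z) -> exists U' : {vspace L}, forall z, z \in U' <-> P z.
  apply: (H (\dim {:L}) 0%VS); first by rewrite leq_subr.
  by move=> z; rewrite memv0 => /eqP ->.
elim=> [|n IH] U hdim hU.
  exists U => z; split; first exact: hU.
  move=> _; suff ->: U = fullv by apply: memvf.
  apply/eqP; rewrite eqEdim subvf /=.
  by move: hdim; rewrite leqn0 subn_eq0.
case: (classic (forall z, P z -> z \in U)) => [hall|hne].
  by exists U => z; split; [exact: hU | exact: hall].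
have [z [Pz nz]] : exists z, P z /\ z \notin U.
  apply: NNPP => hn; apply: hne => z Pz; apply: NNPP => hz; apply: hn.
  by exists z; split => //; apply/negP.
apply: (IH (U + <[z]>)%VS).
  have lt : (\dim U < \dim (U + <[z]>))%N.
    rewrite (ltn_leqif (dimv_leqif_eq (addvSl U <[z]>))).
    apply: (contra _ nz) => /eqP ->; apply/memv_addP; exists 0; first exact: mem0v.
    by exists z; [exact: memv_line | rewrite add0r].
  have le : (\dim (U + <[z]>) <= \dim {:L})%N by apply: dimvS; apply: subvf.
  move: hdim lt le; lia.
move=> w /memv_addP [u hu [t /vlineP [k ->] ->]].
rewrite addrC; apply: Pcl => //; exact: hU.
Qed.
End Vsp.

Section Simple.
Variables (K : fieldType) (L : vectType K) (br : L -> L -> L).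
Hypothesis Hs : simple_lie br.
Let Hbr : lie_bracket br. Proof. by case: Hs. Qed.
Let hB : bilinear_map br. Proof. by case: Hbr. Qed.

Lemma simple_pred (P : L -> Prop) : P 0 ->
  (forall k x y, P x -> P y -> P (k *: x + y)) ->
  (forall a z, P z -> P (br a z)) ->
  (forall z, P z) \/ (forall z, P z -> z = 0).
Proof.
move=> P0 Pcl Pid; have [U hU] := pred_vspace P0 Pcl.
have idU : lie_ideal br U by move=> x y /hU Py; apply/hU; exact: Pid.
case: Hs => _ [_ /(_ U idU)] [] eU.
  by right => z /hU; rewrite eU memv0 => /eqP.
by left => z; apply/hU; rewrite eU memvf.
Qed.

Lemma nonab : exists x y, br x y != 0. Proof. by case: Hs => _ []. Qed.

Lemma perfect_ind (F : L -> L) : linear F ->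
  (forall u v, F (br u v) = 0) -> forall w, F w = 0.
Proof.
move=> hF hFb w.
pose P z := forall G : L -> L, linear G -> (forall u v, G (br u v) = 0) -> G z = 0.
have := @simple_pred P.
case.
- by move=> G hG _; rewrite (l0 hG).
- move=> k x y Px Py G hG hGb; rewrite (lD hG) (lZ hG) (Px G hG hGb) (Py G hG hGb).
  by rewrite scaler0 addr0.
- by move=> a z _ G hG hGb; apply: hGb.
- by move=> /(_ w); apply.
- move=> hP; have [x [y]] := nonab; rewrite (hP (br x y)) ?eqxx //.
  all: by move=> G hG hGb; apply: hGb.
Qed.

Lemma centerless z : (forall y, br z y = 0) -> z = 0.
Proof.
move=> hz.
pose P z := forall y, br z y = 0.
have := @simple_pred P.
case.
- by move=> y; rewrite (b0l hB).
- by move=> k x y Px Py t; rewrite (bDl hB) (bZl hB) Px Py scaler0 addr0.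
- move=> a t Pt y.
  by have := jd Hbr a t y; rewrite !Pt (b0r hB) addr0 => /esym.
- move=> hP; have [x [y]] := nonab; by rewrite hP eqxx.
- by move=> /(_ z hz).
Qed.
End Simple.


Section Gamma.
Variables (K : fieldType) (L : vectType K) (br : L -> L -> L).
Hypothesis Hs : simple_lie br.
Hypothesis hn : forall n : nat, (n.+1%:R : K) != 0.
Let Hbr : lie_bracket br. Proof. by case: Hs. Qed.
Let hB : bilinear_map br. Proof. by case: Hbr. Qed.
Variable g : L -> L -> L.
Hypothesis Hg : biderivation br g.
Hypothesis gskew : forall x y, g x y = - g y x.
Let hg : bilinear_map g. Proof. by case: Hg. Qed.

Definition Grel z w := forall u v, br w (br u v) = br z (g u v).

Lemma Gex z : exists w, Grel z w.
Proof.
pose P z := exists w, Grel z w.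
have := @simple_pred _ _ _ Hs P; case.
- by exists 0 => u v; rewrite !(b0l hB).
- move=> k x y [w1 h1] [w2 h2]; exists (k *: w1 + w2) => u v.
  by rewrite !(bDl hB) !(bZl hB) h1 h2.
- by move=> a t _; exists (g a t) => u v; apply: (bresar Hbr hn Hg gskew).
- by apply.
- move=> hP; have [x [y]] := nonab Hs.
  by rewrite (hP (br x y)) ?eqxx //; exists (g x y) => u v; apply: (bresar Hbr hn Hg gskew).
Qed.

Lemma Guniq z w1 w2 : Grel z w1 -> Grel z w2 -> w1 = w2.
Proof.
move=> h1 h2; apply/eqP; rewrite -subr_eq0; apply/eqP; apply: (centerless Hs).
apply: (perfect_ind Hs (hB.2 _)) => u v.
by rewrite (bBl hB) h1 h2 subrr.
Qed.

Definition gam z := proj1_sig (constructive_indefinite_description _ (Gex z)).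
Lemma gamP z : Grel z (gam z).
Proof. by rewrite /gam; case: constructive_indefinite_description. Qed.

Lemma hgam : linear gam.
Proof.
move=> k x y; apply: (Guniq (gamP _)) => u v.
by rewrite !(bDl hB) !(bZl hB) !gamP.
Qed.

Lemma g2 x y : gam (br x y) = g x y.
Proof.
by apply: (Guniq (gamP _)) => u v; apply: (bresar Hbr hn Hg gskew).
Qed.

Lemma P1 p q : br (gam p) q = br p (gam q).
Proof.
apply/eqP; rewrite -subr_eq0; apply/eqP; move: q.
apply: (perfect_ind Hs (F := fun q => br (gam p) q - br p (gam q))).
  move=> k x y; rewrite !(bDr hB) !(bZr hB) (lD hgam) (lZ hgam) (bDr hB) (bZr hB).
  by rewrite scalerBr addrACA opprD.
by move=> u v; rewrite gamP g2 subrr.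
Qed.

Lemma cent a b : gam (br a b) = br (gam a) b.
Proof.
pose E a b := gam (br a b) - br (gam a) b.
have Edef : forall a b, E a b = gam (br a b) - br (gam a) b by [].
have h1 : forall b' t, br (E a b) (br b' t) = 0.
  move=> b'; apply: (perfect_ind Hs (F := fun t => br (E a b) (br b' t))).
    by move=> k x y; rewrite (bDr hB) (bZr hB) (bDr hB) (bZr hB).
  by move=> u v; apply: (Fin Hbr hn Hg hgam g2 P1 Edef).
have h2 : forall q, br (E a b) q = 0 by apply: (perfect_ind Hs (hB.2 _)).
by apply/eqP; rewrite -subr_eq0; apply/eqP; apply: (centerless Hs).
Qed.
End Gamma.


Module EigM.
Import VectorInternalTheory.
Section Eig.
Variables (K : closedFieldType) (L : vectType K) (gm : L -> L).
Hypothesis hgm : linear gm.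
Hypothesis hL : (0 < \dim {:L})%N.

Lemma eigvec : exists lam k, k != 0 /\ gm k = lam *: k.
Proof.
pose h := fun r => VectorInternalTheory.v2r (gm (VectorInternalTheory.r2v r)).
have hh : linear h.
  move=> k x y; rewrite /h.
  by rewrite linearP (lD hgm) (lZ hgm) linearP.
pose A := lin1_mx (packL hh).
have : size (char_poly A) != 1%N.
  by rewrite size_char_poly; move: hL; rewrite dimvf; case: (dim L).
move/closed_rootP => [lam]; rewrite -eigenvalue_root_char => /eigenvalueP [v hv nv].
exists lam, (VectorInternalTheory.r2v v); split.
  apply: contra nv => /eqP h0; apply/eqP.
  by rewrite -[v](VectorInternalTheory.r2vK) h0 linear0.
apply: VectorInternalTheory.v2r_inj.
have -> : VectorInternalTheory.v2r (gm (VectorInternalTheory.r2v v)) = h v by [].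
have -> : h v = packL hh v by [].
by rewrite -mul_rV_lin1 -/A hv linearZ /= VectorInternalTheory.r2vK.
Qed.
End Eig.
End EigM.


Section Final.
Variables (K : closedFieldType) (L : vectType K) (br : L -> L -> L).
Hypothesis Hs : simple_lie br.
Hypothesis hn : forall n : nat, (n.+1%:R : K) != 0.
Let Hbr : lie_bracket br. Proof. by case: Hs. Qed.
Let hB : bilinear_map br. Proof. by case: Hbr. Qed.
Ltac fin := cbv beta; expand hB; coords; ring.

Lemma dimpos : (0 < \dim {:L})%N.
Proof.
have [x [y]] := nonab Hs; rewrite lt0n; apply: contra => /eqP d0.
have : x \in fullv by apply: memvf.
move: d0 => /eqP; rewrite dimv_eq0 => /eqP ->; rewrite memv0 => /eqP ->.
by rewrite (b0l hB).
Qed.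

Lemma skew_scalar (g : L -> L -> L) : biderivation br g -> (forall x y, g x y = - g y x) ->
  exists lam, forall x y, g x y = lam *: br x y.
Proof.
move=> Hg gskew.
pose gm := gam Hs hn Hg gskew.
have hgm : linear gm := hgam Hs hn Hg gskew.
have [lam [k [nk hk]]] := EigM.eigvec hgm dimpos.
pose P z := gm z = lam *: z.
have := @simple_pred _ _ _ Hs P; case.
- by rewrite /P (l0 hgm) scaler0.
- move=> c x y Px Py; rewrite /P (lD hgm) (lZ hgm) Px Py.
  by rewrite scalerDr !scalerA mulrC.
- move=> a z Pz; rewrite /P /gm (cent Hs hn Hg gskew) (P1 Hs hn Hg gskew) -/gm Pz.
  by rewrite (bZr hB).
- move=> hall; exists lam => x y.
  by rewrite -(g2 Hs hn Hg gskew) -/gm hall.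
- by move=> /(_ k hk) /eqP; rewrite (negPf nk).
Qed.

Lemma sym_zero (s : L -> L -> L) : biderivation br s -> (forall x y, s x y = s y x) ->
  forall x y, s x y = 0.
Proof.
move=> Hsd ssym.
pose P z := forall y u v,
  br (br z y) (br u v) + br (br z u) (br v y) + br (br z v) (br y u) = 0.
have := @simple_pred _ _ _ Hs P; case.
- by move=> y u v; rewrite !(b0l hB) !addr0.
- move=> c x y Px Py t u v; tozero.
  apply: (use c (Px t u v)); apply: (use 1 (Py t u v)); fin.
- by move=> a z Pz y u v; apply: (Z0ideal Hbr Pz).
- move=> hall; exfalso; have [x [y]] := nonab Hs; apply/negP; rewrite negbK.
  have h1 : forall a b q, br (br a b) q = 0.
    move=> a b; apply: (perfect_ind Hs (hB.2 _)) => c e.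
    exact: (Z0all Hbr hn hall).
  have h2 : forall p q, br p q = 0.
    move=> p q; apply: (perfect_ind Hs (F := fun t => br t q) (hB.1 _)) => a b.
    exact: h1.
  by rewrite h2.
- move=> h0 x z; apply: h0 => y u v; exact: (Z0memb Hbr hn Hsd ssym).
Qed.
End Final.


Lemma scC (R : realType) (k c : complex R) : k *: c = k * c. Proof. by []. Qed.

Unset Implicit Arguments.
Import Num.Theory.

Theorem lemma2p1 (R : realType) (L : vectType (complex R))
    (br : L -> L -> L) (f : L -> L -> L) :
  simple_lie br -> biderivation br f ->
  exists phi psi : L -> L,
    [/\ linear phi, linear psi &
        forall x y, f x y = br (phi x) y /\ f x y = br x (psi y)].
Proof.
move=> Hs Hf.
have hn : forall n : nat, (n.+1%:R : complex R) != 0 by move=> n; rewrite pnatr_eq0.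
have Hbr : lie_bracket br by case: Hs.
have hB : bilinear_map br by case: Hbr.
have hf : bilinear_map f by case: Hf.
have f1 : forall x y z, f (br x y) z = br x (f y z) + br (f x z) y by case: Hf.
have f2 : forall x y z, f x (br y z) = br (f x y) z + br y (f x z) by case: Hf.
pose g x y := f x y - f y x.
pose s x y := f x y + f y x.
have Hg : biderivation br g.
  split.
  - split => [y0|x0] k a b; rewrite /g /=; tozero;
      rewrite ?(bDl hf, bDr hf, bZl hf, bZr hf); coords; rewrite ?scC; ring.
  - move=> x y z; rewrite /g /=; tozero; rewrite f1 f2;
      rewrite ?(bDl hB, bDr hB, bNl hB, bNr hB); coords; rewrite ?scC; ring.
  - move=> x y z; rewrite /g /=; tozero; rewrite f1 f2;
      rewrite ?(bDl hB, bDr hB, bNl hB, bNr hB); coords; rewrite ?scC; ring.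
have Hsd : biderivation br s.
  split.
  - split => [y0|x0] k a b; rewrite /s /=; tozero;
      rewrite ?(bDl hf, bDr hf, bZl hf, bZr hf); coords; rewrite ?scC; ring.
  - move=> x y z; rewrite /s /=; tozero; rewrite f1 f2;
      rewrite ?(bDl hB, bDr hB, bNl hB, bNr hB); coords; rewrite ?scC; ring.
  - move=> x y z; rewrite /s /=; tozero; rewrite f1 f2;
      rewrite ?(bDl hB, bDr hB, bNl hB, bNr hB); coords; rewrite ?scC; ring.
have gskew : forall x y, g x y = - g y x by move=> x y; rewrite /g opprB.
have ssym : forall x y, s x y = s y x by move=> x y; rewrite /s addrC.
have [lam hlam] := skew_scalar Hs hn Hg gskew.
have s0 := sym_zero Hs hn Hsd ssym.
have key : forall x y, f x y = (lam / 2%:R) *: br x y.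
  move=> x y; apply: (scalerI (hn 1%N)).
  have e : 2%:R *: f x y = lam *: br x y.
    have e1 := hlam x y; have e2 := s0 x y; rewrite /g in e1; rewrite /s in e2.
    tozero; apply: (use 1 e1); apply: (use 1 e2); coords; rewrite ?scC; ring.
  by rewrite e scalerA mulrC divfK ?(hn 1%N).
exists (fun x => (lam / 2%:R) *: x), (fun x => (lam / 2%:R) *: x); split.
- by move=> k a b; rewrite scalerDr !scalerA mulrC.
- by move=> k a b; rewrite scalerDr !scalerA mulrC.
- by move=> x y; rewrite key (bZl hB) (bZr hB).
Qed.
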